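(* Let $G$ be a graph and $e=ab$ an edge of $G$. If $G$ has a minor model of $K_5$ or $K_{2,2,2}$ in which $a$ and $b$ lie in different branch sets, then $G$ has an induced minor model of $K_5$ or $K_{2,2,2}$ in which $a$ and $b$ lie in different branch sets.
   Context: A minor model of $M$ in $G$ is a partition of $V(G)$ into nonempty branch sets $B_x$ ($x\in V(M)$), each inducing a connected subgraph, such that for every $xy\in E(M)$ some edge of $G$ joins $B_x$ and $B_y$. It is an induced minor model if moreover $xy\in E(M)$ if and only if some edge of $G$ joins $B_x$ and $B_y$ (i.e. $M$ is obtained by contractions only). *)

(* Defs.v *)
From mathcomp Require Import all_boot.
Set Implicit Arguments. Unset Strict Implicit. Unset Printing Implicit Defensive.

Definition simple_graph (V : finType) (e : rel V) : Prop :=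
  symmetric e /\ irreflexive e.

(* A minor model of (M, eM) in (V, e): a map f : V -> M assigning every
   vertex of G to its branch set B_x = f^-1(x). *)
Definition branch_rel (V M : finType) (e : rel V) (f : V -> M) (x : M) : rel V :=
  [rel u v | [&& e u v, f u == x & f v == x]].

Definition minor_model (V M : finType) (e : rel V) (eM : rel M) (f : V -> M) : Prop :=
  [/\ (forall x : M, exists v : V, f v = x),
      (forall (x : M) (u v : V), f u = x -> f v = x -> connect (branch_rel e f x) u v)
    & (forall x y : M, eM x y -> exists u v : V, [/\ f u = x, f v = y & e u v])].

Definition induced_minor_model (V M : finType) (e : rel V) (eM : rel M) (f : V -> M) : Prop :=
  minor_model e eM f /\
  (forall x y : M, x != y -> (exists u v : V, [/\ f u = x, f v = y & e u v]) -> eM x y).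

Definition K5 : rel 'I_5 := fun i j => i != j.

Definition K222 : rel 'I_6 := fun i j => (i./2 != j./2)%N.

(* Main.v *)
Require Import Defs.
From mathcomp Require Import all_boot.

Section Contract.
Variables (V M M' : finType) (e : rel V) (eM : rel M) (eM' : rel M').

Lemma contract (f : V -> M) (h : M -> M') (p q r s : M) :
  symmetric e -> minor_model e eM f -> eM p q ->
  (exists u v, [/\ f u = r, f v = s & e u v]) ->
  (forall x', exists x, h x = x') ->
  (forall x y, h x = h y -> [\/ x = y, x = p /\ y = q | x = q /\ y = p]) ->
  (forall x' y', eM' x' y' -> exists x y,
      [/\ h x = x', h y = y' & [\/ eM x y, x = r /\ y = s | x = s /\ y = r]]) ->
  minor_model e eM' (fun v => h (f v)).
Proof.
move=> esym [fs fc fe] epq ers hs hf he; split.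
- move=> x'; have [x <-] := hs x'; have [v <-] := fs x; by exists v.
- have lift : forall y u v, f u = y -> f v = y ->
    connect (branch_rel e (fun v => h (f v)) (h y)) u v.
    move=> y u v fu fv; apply: (connect_sub _ (fc y u v fu fv)).
    move=> w z /= /and3P [ewz /eqP fw /eqP fz]; apply: connect1.
    by rewrite /branch_rel /= ewz fw fz eqxx.
  move=> x' u v gu gv.
  have: h (f u) = h (f v) by rewrite gu gv.
  case/hf => [E | [Eu Ev] | [Eu Ev]].
  + by rewrite -gu; apply: lift => //; rewrite E.
  + have [u0 [v0 [fu0 fv0 e0]]] := fe p q epq.
    rewrite -gu Eu; apply: (connect_trans (lift p u u0 Eu fu0)).
    apply: (@connect_trans _ _ v0).
      by apply: connect1; rewrite /branch_rel /= e0 fu0 fv0 -Eu -Ev gu gv eqxx.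
    have -> : h p = h q by rewrite -Eu -Ev gu gv.
    exact: lift.
  + have [u0 [v0 [fu0 fv0 e0]]] := fe p q epq.
    rewrite -gu Eu; apply: (connect_trans (lift q u v0 Eu fv0)).
    apply: (@connect_trans _ _ u0).
      by apply: connect1; rewrite /branch_rel /= esym e0 fu0 fv0 -Eu -Ev gu gv eqxx.
    have -> : h q = h p by rewrite -Eu -Ev gu gv.
    exact: lift.
- move=> x' y' /he [x [y [<- <- [exy | [-> ->] | [-> ->]]]]].
  + have [u [v [fu fv euv]]] := fe x y exy; exists u, v; by rewrite fu fv.
  + have [u [v [fu fv euv]]] := ers; exists u, v; by rewrite fu fv.
  + have [u [v [fu fv euv]]] := ers; exists v, u; by rewrite fu fv esym.
Qed.
End Contract.

Definition mergen (p q x : nat) : nat :=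
  let y := if x == q then p else x in if (q < y)%N then y.-1 else y.
Definition K222n (i j : nat) := (i./2 != j./2)%N.
Notation N6 := (iota 0 6).
Notation N5 := (iota 0 5).
Definition goodbase (r s p q : nat) : bool :=
  [&& all (fun x => mergen p q x < 5) N6,
   all (fun x => all (fun y => (mergen p q x == mergen p q y) ==>
      [|| x == y, (x == p) && (y == q) | (x == q) && (y == p)]) N6) N6,
   all (fun x' => has (fun x => mergen p q x == x') N6) N5 &
   all (fun x' => all (fun y' => (x' != y') ==> has (fun x => has (fun y =>
      [&& mergen p q x == x', mergen p q y == y' &
        [|| K222n x y, (x == r) && (y == s) | (x == s) && (y == r)]]) N6) N6) N5) N5].
Definition cand (r p q : nat) : bool := [&& p < q, K222n p q, K222n p r & K222n q r].

Lemma checkA : all (fun r => all (fun s => [&& r != s & r./2 == s./2] ==>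
   all (fun p => all (fun q => cand r p q ==> goodbase r s p q) N6) N6) N6) N6.
Proof. vm_compute. reflexivity. Qed.

Lemma checkB : all (fun r => all (fun s => all (fun i => all (fun j =>
  [&& r != s, r./2 == s./2 & i != j] ==>
   has (fun p => has (fun q => cand r p q && (mergen p q i != mergen p q j)) N6) N6)
   N6) N6) N6) N6.
Proof. vm_compute. reflexivity. Qed.

Lemma in6 (x : 'I_6) : nat_of_ord x \in N6.
Proof. by rewrite mem_iota add0n ltn_ord. Qed.
Lemma in5 (x : 'I_5) : nat_of_ord x \in N5.
Proof. by rewrite mem_iota add0n ltn_ord. Qed.

Theorem mainTheorem16 (V : finType) (e : rel V) (a b : V) :
  simple_graph e -> e a b ->
  ((exists f : V -> 'I_5, minor_model e K5 f /\ f a != f b) \/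
   (exists f : V -> 'I_6, minor_model e K222 f /\ f a != f b)) ->
  ((exists f : V -> 'I_5, induced_minor_model e K5 f /\ f a != f b) \/
   (exists f : V -> 'I_6, induced_minor_model e K222 f /\ f a != f b)).
Proof.
move=> [esym eirr] eab [[f [mf fab]] | [f [mf fab]]].
  by left; exists f; split => //; split => // x y xy _; exact: xy.
pose real (x y : 'I_6) := [exists u, exists v, [&& f u == x, f v == y & e u v]].
case: (boolP [forall x, forall y, ((x != y) && real x y) ==> K222 x y]) => [H | H].
  right; exists f; split => //; split => // x y xy [u [v [fu fv euv]]].
  move/forallP: H => /(_ x) /forallP /(_ y) /implyP; apply.
  rewrite xy /=; apply/existsP; exists u; apply/existsP; exists v.
  by rewrite fu fv euv !eqxx.
move/forallPn: H => [r /forallPn [s]]; rewrite negb_imply => /andP [/andP [rs rl] nK].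
have ers : exists u v, [/\ f u = r, f v = s & e u v].
  move/existsP: rl => [u /existsP [v /and3P [/eqP fu /eqP fv euv]]].
  by exists u, v.
have rsn : (nat_of_ord r != nat_of_ord s) && ((nat_of_ord r)./2 == (nat_of_ord s)./2).
  by rewrite rs; move: nK; rewrite /K222 negbK.
have := allP checkB _ (in6 r) => /allP /(_ _ (in6 s)) /allP /(_ _ (in6 (f a)))
   /allP /(_ _ (in6 (f b))) /implyP.
case/andP: rsn => rs' rl'; rewrite rs' rl' (fab : nat_of_ord (f a) != nat_of_ord (f b)) => /(_ isT) /hasP [p p6 /hasP [q q6]].
move=> /andP [cpq mab].
have := allP checkA _ (in6 r) => /allP /(_ _ (in6 s)) /implyP.
rewrite rs' rl' => /(_ isT) /allP /(_ _ p6) /allP /(_ _ q6) /implyP /(_ cpq).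
case/and4P => /allP bnd /allP fib /allP sur /allP edg.
have p6' : (p < 6)%N by rewrite mem_iota in p6.
have q6' : (q < 6)%N by rewrite mem_iota in q6.
pose P : 'I_6 := Ordinal p6'. pose Q : 'I_6 := Ordinal q6'.
pose h (x : 'I_6) : 'I_5 := inord (mergen p q x).
have vh x : nat_of_ord (h x) = mergen p q x by rewrite /h inordK // bnd // in6.
left; exists (fun v => h (f v)); split; last first.
  by apply: contra mab => /eqP E; apply/eqP; rewrite -!vh E.
split; last by move=> x y xy _; exact: xy.
apply: (@contract _ _ _ e K222 K5 f h P Q r s) => //.
- by case/and4P: cpq.
- move=> x'; have /hasP [x x6 /eqP mx] := sur _ (in5 x').
  have x6' : (x < 6)%N by rewrite mem_iota in x6.
  by exists (Ordinal x6'); apply: val_inj; rewrite /= vh.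
- move=> x y hxy; have := allP (fib _ (in6 x)) _ (in6 y).
  rewrite -!vh hxy eqxx /= => /or3P [/eqP E | /andP [/eqP E1 /eqP E2] | /andP [/eqP E1 /eqP E2]].
  + by constructor 1; apply: val_inj.
  + by constructor 2; split; apply: val_inj.
  + by constructor 3; split; apply: val_inj.
- move=> x' y' xy; have := allP (edg _ (in5 x')) _ (in5 y'); rewrite /K5 in xy.
  move=> /implyP /(_ xy) /hasP [x x6 /hasP [y y6 /and3P [/eqP mx /eqP my]]].
  have x6' : (x < 6)%N by rewrite mem_iota in x6.
  have y6' : (y < 6)%N by rewrite mem_iota in y6.
  move=> H; exists (Ordinal x6'), (Ordinal y6'); split.
  + by apply: val_inj; rewrite /= vh.
  + by apply: val_inj; rewrite /= vh.
  + case/or3P: H => [k | /andP [/eqP E1 /eqP E2] | /andP [/eqP E1 /eqP E2]].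
    * by constructor 1.
    * by constructor 2; split; apply: val_inj.
    * by constructor 3; split; apply: val_inj.
Qed.
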